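(* For any natural number $n \geq 1$, $\{\omega^n, (\omega^n)^\star\} \leq_c \{\omega^{2n-1}, (\omega^{2n-1})^\star\}$.
   Context: Structures have domains contained in $\omega$. For countable structures $\mathcal{A},\mathcal{B}$, the class $\{\mathcal{A},\mathcal{B}\}$ denotes the class of all structures (with domain $\subseteq\omega$) isomorphic to $\mathcal{A}$ or to $\mathcal{B}$. Linear orders are in the language $\{<\}$; $L^\star$ is the reverse of a linear order $L$; $\omega^m$ denotes ordinal exponentiation (as an order type). An enumeration operator $\Gamma$ is a c.e. set of pairs $(\alpha,\varphi)$ with $\alpha$ a finite set of basic (atomic or negated atomic) sentences of the input language with constants from $\omega$ and $\varphi$ a basic sentence of the output language with constants from $\omega$; $\Gamma(X)=\{\varphi : (\alpha,\varphi)\in\Gamma,\ \alpha\subseteq X\}$. $\Gamma$ is a computable embedding of $\mathcal{K}_0$ into $\mathcal{K}_1$ ($\mathcal{K}_0\leq_c\mathcal{K}_1$) if for every $\mathcal{A}\in\mathcal{K}_0$, $\Gamma$ applied to the atomic diagram of $\mathcal{A}$ is the atomic diagram of a structure $\Gamma(\mathcal{A})\in\mathcal{K}_1$, and for all $\mathcal{A},\mathcal{B}\in\mathcal{K}_0$, $\mathcal{A}\cong\mathcal{B}$ iff $\Gamma(\mathcal{A})\cong\Gamma(\mathcal{B})$. *)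

(* Defs.v *)
From Stdlib Require Import List Arith Lia.
Import ListNotations.

Inductive prf : Type :=
| PZero : prf
| PSucc : prf
| PProj : nat -> prf
| PComp : prf -> list prf -> prf
| PRec  : prf -> prf -> prf
| PMu   : prf -> prf.

Inductive eval : prf -> list nat -> nat -> Prop :=
| ev_zero xs : eval PZero xs 0
| ev_succ xs : eval PSucc xs (S (hd 0 xs))
| ev_proj i xs : eval (PProj i) xs (nth i xs 0)
| ev_comp f gs xs ys v : evals gs xs ys -> eval f ys v -> eval (PComp f gs) xs v
| ev_rec0 f g xs v : eval f xs v -> eval (PRec f g) (0 :: xs) v
| ev_recS f g n xs r v :
    eval (PRec f g) (n :: xs) r -> eval g (n :: r :: xs) v ->
    eval (PRec f g) (S n :: xs) v
| ev_mu f xs y :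
    eval f (y :: xs) 0 ->
    (forall z, z < y -> exists v, v <> 0 /\ eval f (z :: xs) v) ->
    eval (PMu f) xs y
with evals : list prf -> list nat -> list nat -> Prop :=
| evs_nil xs : evals [] xs []
| evs_cons g gs xs y ys : eval g xs y -> evals gs xs ys -> evals (g :: gs) xs (y :: ys).

Definition ce (S : nat -> Prop) : Prop :=
  exists e : prf, forall x, S x <-> exists y, eval e [x] y.

Inductive sent : Type :=
| SLt  : nat -> nat -> sent
| SNLt : nat -> nat -> sent
| SEq  : nat -> nat -> sent
| SNEq : nat -> nat -> sent.

Definition cpair (x y : nat) : nat := (x + y) * (x + y + 1) / 2 + y.

Definition enc_sent (s : sent) : nat :=
  match s with
  | SLt i j => 4 * cpair i j
  | SNLt i j => 4 * cpair i j + 1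
  | SEq i j => 4 * cpair i j + 2
  | SNEq i j => 4 * cpair i j + 3
  end.

Fixpoint enc_list (l : list sent) : nat :=
  match l with
  | [] => 0
  | s :: t => S (cpair (enc_sent s) (enc_list t))
  end.

Definition enc_pair (p : list sent * sent) : nat :=
  cpair (enc_list (fst p)) (enc_sent (snd p)).

(* An enumeration operator: a c.e. set of pairs (alpha, phi), alpha a finite
   set (given as a list) of basic sentences, phi a basic sentence. *)
Definition enum_operator (G : list sent * sent -> Prop) : Prop :=
  (forall p q, enc_pair p = enc_pair q -> G p -> G q) /\
  ce (fun x => exists p, enc_pair p = x /\ G p).

Definition apply_op (G : list sent * sent -> Prop) (X : sent -> Prop) (phi : sent) : Prop :=
  exists alpha, G (alpha, phi) /\ (forall psi, In psi alpha -> X psi).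

Record pres (T : Type) := Pres { pdom : T -> Prop; prel : T -> T -> Prop }.
Arguments Pres {T}.
Arguments pdom {T}.
Arguments prel {T}.

Definition str := pres nat.

Definition iso {T U : Type} (A : pres T) (B : pres U) : Prop :=
  exists f : T -> U,
    (forall x, pdom A x -> pdom B (f x)) /\
    (forall x y, pdom A x -> pdom A y -> f x = f y -> x = y) /\
    (forall y, pdom B y -> exists x, pdom A x /\ f x = y) /\
    (forall x y, pdom A x -> pdom A y -> (prel A x y <-> prel B (f x) (f y))).

Definition diag (A : str) (phi : sent) : Prop :=
  match phi with
  | SLt i j => pdom A i /\ pdom A j /\ prel A i j
  | SNLt i j => pdom A i /\ pdom A j /\ ~ prel A i j
  | SEq i j => pdom A i /\ pdom A j /\ i = j
  | SNEq i j => pdom A i /\ pdom A j /\ i <> j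
  end.

(* omega^n = ordinals below omega^n = Cantor normal forms
   omega^(n-1) a_(n-1) + ... + a_0, i.e. n-tuples of naturals (most significant
   first) under the lexicographic order. *)
Fixpoint lexlt (s t : list nat) : Prop :=
  match s, t with
  | a :: s', b :: t' => a < b \/ (a = b /\ lexlt s' t')
  | _, _ => False
  end.

Definition omega_pow (n : nat) : pres (list nat) :=
  Pres (fun s => length s = n) lexlt.

Definition rev_order {T : Type} (L : pres T) : pres T :=
  Pres (pdom L) (fun x y => prel L y x).

Definition cls_omega_pow (n : nat) (A : str) : Prop :=
  iso A (omega_pow n) \/ iso A (rev_order (omega_pow n)).

Definition comp_embeds (K0 K1 : str -> Prop) : Prop :=
  exists G : list sent * sent -> Prop,
    enum_operator G /\
    (forall A, K0 A -> exists B, K1 B /\ forall phi, apply_op G (diag A) phi <-> diag B phi) /\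
    (forall A A' B B', K0 A -> K0 A' ->
       (forall phi, apply_op G (diag A) phi <-> diag B phi) ->
       (forall phi, apply_op G (diag A') phi <-> diag B' phi) ->
       (iso A A' <-> iso B B')).

(* Main.v *)
Require Import Defs.
From Stdlib Require Import List Arith Lia PeanoNat.
From Stdlib Require Import Classical ClassicalEpsilon FunctionalExtensionality PropExtensionality Wellfounded.
Import ListNotations.

Fixpoint tri (n : nat) : nat := match n with 0 => 0 | S k => tri k + S k end.

Lemma tri_double n : 2 * tri n = n * (n + 1).
Proof. induction n; simpl tri; nia. Qed.

Lemma cpair_tri x y : cpair x y = tri (x + y) + y.
Proof.
  unfold cpair. f_equal. rewrite <- tri_double.
  rewrite Nat.mul_comm. apply Nat.div_mul. lia.
Qed.

Lemma tri_ge n : n <= tri n.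
Proof. induction n; simpl; lia. Qed.

Lemma tri_mono s s' : s <= s' -> tri s <= tri s'.
Proof. induction 1; simpl; lia. Qed.

Lemma cpair_inj a b a' b' : cpair a b = cpair a' b' -> a = a' /\ b = b'.
Proof.
  rewrite !cpair_tri. intro H.
  destruct (lt_eq_lt_dec (a+b) (a'+b')) as [[H1|H1]|H1].
  - pose proof (tri_mono (S (a+b)) (a'+b') H1). simpl in H0. lia.
  - rewrite H1 in H. lia.
  - pose proof (tri_mono (S (a'+b')) (a+b) H1). simpl in H0. lia.
Qed.

Lemma cpair_ge_l a b : a <= cpair a b.
Proof. rewrite cpair_tri. pose proof (tri_ge (a+b)). lia. Qed.
Lemma cpair_ge_r a b : b <= cpair a b.
Proof. rewrite cpair_tri. lia. Qed.

Lemma enc_sent_inj s s' : enc_sent s = enc_sent s' -> s = s'.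
Proof.
  destruct s as [i j|i j|i j|i j], s' as [i' j'|i' j'|i' j'|i' j']; simpl; intro H;
  try lia;
  assert (E : cpair i j = cpair i' j') by lia; apply cpair_inj in E; destruct E; subst; reflexivity.
Qed.

Lemma enc_list_inj l l' : enc_list l = enc_list l' -> l = l'.
Proof.
  revert l'; induction l as [|s l IH]; destruct l' as [|s' l']; simpl; intro H; try lia; auto.
  injection H as H. apply cpair_inj in H. destruct H as [H1 H2].
  apply enc_sent_inj in H1. apply IH in H2. subst; reflexivity.
Qed.

Lemma enc_pair_inj p q : enc_pair p = enc_pair q -> p = q.
Proof.
  destruct p as [a s], q as [a' s']; unfold enc_pair; simpl; intro H.
  apply cpair_inj in H. destruct H as [H1 H2].
  apply enc_list_inj in H1. apply enc_sent_inj in H2. subst; reflexivity.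
Qed.

Definition constP (k : nat) : prf := Nat.iter k (fun p => PComp PSucc [p]) PZero.
Definition predP := PRec PZero (PProj 0).
Definition rsubP := PRec (PProj 0) (PComp predP [PProj 1]).
Definition subP := PComp rsubP [PProj 1; PProj 0].
Definition addP := PRec (PProj 0) (PComp PSucc [PProj 1]).
Definition mulP := PRec PZero (PComp addP [PProj 1; PProj 2]).
Definition triP := PRec PZero (PComp addP [PProj 1; PComp PSucc [PProj 0]]).

Lemma ev1 f g xs y v : eval g xs y -> eval f [y] v -> eval (PComp f [g]) xs v.
Proof. intros. eapply ev_comp; [|eassumption]. repeat constructor; auto. Qed.
Lemma ev2 f g1 g2 xs y1 y2 v : eval g1 xs y1 -> eval g2 xs y2 -> eval f [y1; y2] v ->
  eval (PComp f [g1; g2]) xs v.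
Proof. intros. eapply ev_comp; [|eassumption]. repeat constructor; auto. Qed.
Lemma evp i xs v : v = nth i xs 0 -> eval (PProj i) xs v.
Proof. intros ->; constructor. Qed.
Lemma evs xs v : v = S (hd 0 xs) -> eval PSucc xs v.
Proof. intros ->; constructor. Qed.

Lemma eval_const k xs : eval (constP k) xs k.
Proof.
  induction k; simpl. constructor.
  eapply ev1. apply IHk. apply evs. reflexivity.
Qed.

Lemma eval_pred n : eval predP [n] (Nat.pred n).
Proof.
  induction n. constructor. constructor.
  eapply ev_recS. apply IHn. apply evp. reflexivity.
Qed.

Lemma eval_rsub n x : eval rsubP [n; x] (x - n).
Proof.
  induction n. replace (x - 0) with x by lia. constructor. apply evp; reflexivity.
  eapply ev_recS. apply IHn. eapply ev1. apply evp; reflexivity.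
  replace (x - S n) with (Nat.pred (x - n)) by lia. apply eval_pred.
Qed.

Lemma eval_sub x y : eval subP [x; y] (x - y).
Proof. eapply ev2; try (apply evp; reflexivity). apply eval_rsub. Qed.

Lemma eval_add n y : eval addP [n; y] (n + y).
Proof.
  induction n. constructor. apply evp; reflexivity.
  eapply ev_recS. apply IHn. eapply ev1. apply evp; reflexivity. apply evs; reflexivity.
Qed.

Lemma eval_mul n y : eval mulP [n; y] (n * y).
Proof.
  induction n. constructor. constructor.
  eapply ev_recS. apply IHn. replace (S n * y) with (n * y + y) by lia.
  eapply ev2; try (apply evp; reflexivity). apply eval_add.
Qed.

Lemma eval_tri n : eval triP [n] (tri n).
Proof.
  induction n. constructor. constructor.
  eapply ev_recS. apply IHn. simpl tri.
  eapply ev2. apply evp; reflexivity. eapply ev1. apply evp; reflexivity. apply evs; reflexivity.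
  apply eval_add.
Qed.
Inductive ex : Type :=
| EV (i : nat) | EC (k : nat) | EAdd (a b : ex) | EMul (a b : ex) | ESub (a b : ex)
| ETri (a : ex) | EBP (b body : ex).

Fixpoint bprod (n : nat) (g : nat -> nat) : nat :=
  match n with 0 => g 0 | S k => bprod k g * g (S k) end.

Fixpoint den (e : ex) (env : list nat) : nat :=
  match e with
  | EV i => nth i env 0
  | EC k => k
  | EAdd a b => den a env + den b env
  | EMul a b => den a env * den b env
  | ESub a b => den a env - den b env
  | ETri a => tri (den a env)
  | EBP b body => bprod (den b env) (fun v => den body (v :: env))
  end.

Definition projs (k N : nat) : list prf := map PProj (seq k N).

Fixpoint comp (N : nat) (e : ex) : prf :=
  match e with
  | EV i => PProj i
  | EC k => constP k
  | EAdd a b => PComp addP [comp N a; comp N b]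
  | EMul a b => PComp mulP [comp N a; comp N b]
  | ESub a b => PComp subP [comp N a; comp N b]
  | ETri a => PComp triP [comp N a]
  | EBP b body =>
      PComp (PRec (PComp (comp (S N) body) (PZero :: projs 0 N))
                  (PComp mulP [PProj 1; PComp (comp (S N) body) (PComp PSucc [PProj 0] :: projs 2 N)]))
            (comp N b :: projs 0 N)
  end.

Lemma evals_projs N k xs : evals (projs k N) xs (map (fun i => nth i xs 0) (seq k N)).
Proof.
  revert k; induction N; intro k; simpl; constructor. constructor. apply IHN.
Qed.

Lemma map_nth_seq env l : map (fun i => nth i (l ++ env) 0) (seq (length l) (length env)) = env.
Proof.
  revert l; induction env as [|a env IH]; intro l; simpl. reflexivity.
  f_equal. rewrite nth_middle. reflexivity.
  specialize (IH (l ++ [a])). rewrite <- app_assoc in IH. simpl in IH.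
  rewrite length_app in IH. simpl in IH. rewrite Nat.add_1_r in IH. exact IH.
Qed.

Lemma comp_correct e : forall N env, length env = N -> eval (comp N e) env (den e env).
Proof.
  induction e; intros N env HN; simpl.
  - constructor.
  - apply eval_const.
  - eapply ev2; eauto. apply eval_add.
  - eapply ev2; eauto. apply eval_mul.
  - eapply ev2; eauto. apply eval_sub.
  - eapply ev1; eauto. apply eval_tri.
  - eapply ev_comp.
    + constructor. apply IHe1; auto. apply evals_projs.
    + pose proof (map_nth_seq env []) as E. simpl in E. rewrite HN in E. rewrite E.
      generalize (den e1 env) as n. induction n.
      * constructor. eapply ev_comp. constructor. constructor. apply evals_projs.
        rewrite E. apply IHe2. simpl; lia.
      * eapply ev_recS. apply IHn.
        eapply ev2. apply evp; reflexivity.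
        eapply ev_comp. constructor. eapply ev1. apply evp; reflexivity. apply evs; reflexivity.
        apply evals_projs.
        pose proof (map_nth_seq env [n; bprod n (fun v => den e2 (v :: env))]) as E2.
        simpl in E2. rewrite HN in E2. simpl. rewrite E2. apply IHe2. simpl; lia.
        apply eval_mul.
Qed.

Fixpoint mufree (p : prf) : Prop :=
  match p with
  | PZero | PSucc | PProj _ => True
  | PComp f gs => mufree f /\ fold_right and True (map mufree gs)
  | PRec f g => mufree f /\ mufree g
  | PMu _ => False
  end.

Scheme eval_ind2 := Induction for eval Sort Prop
with evals_ind2 := Induction for evals Sort Prop.

Lemma eval_det : forall p xs v, eval p xs v -> mufree p -> forall v', eval p xs v' -> v = v'.
Proof.
  apply (eval_ind2 (fun p xs v _ => mufree p -> forall v', eval p xs v' -> v = v')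
                   (fun gs xs ys _ => fold_right and True (map mufree gs) -> forall ys', evals gs xs ys' -> ys = ys')).
  - intros xs _ v' H; inversion H; auto.
  - intros xs _ v' H; inversion H; auto.
  - intros i xs _ v' H; inversion H; auto.
  - intros f gs xs ys v Hgs IHgs Hf IHf [M1 M2] v' H. inversion H; subst.
    assert (ys = ys0) by (apply IHgs; auto). subst. apply IHf; auto.
  - intros f g xs v Hf IHf [M1 M2] v' H. inversion H; subst. apply IHf; auto.
  - intros f g n xs r v H1 IH1 H2 IH2 [M1 M2] v' H. inversion H; subst.
    assert (r = r0) by (apply IH1; simpl; auto). subst. apply IH2; auto.
  - intros f xs y _ _ _ [].
  - intros xs _ ys' H; inversion H; auto.
  - intros g gs xs y ys Hg IHg Hgs IHgs [M1 M2] ys' H. inversion H; subst.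
    f_equal. apply IHg; auto. apply IHgs; auto.
Qed.

Lemma mufree_projs N k : fold_right and True (map mufree (projs k N)).
Proof. revert k; induction N; intro k; simpl; auto. split; auto. apply IHN. Qed.

Lemma mufree_comp e : forall N, mufree (comp N e).
Proof.
  induction e; intro N; simpl; repeat split; auto; try apply mufree_projs.
  induction k; simpl; auto.
Qed.

Lemma comp_sound e N env v : length env = N -> eval (comp N e) env v -> v = den e env.
Proof.
  intros HN H. eapply eval_det. apply H. apply mufree_comp. apply comp_correct; auto.
Qed.

Lemma ce_test (test : ex) (P : nat -> Prop) : (forall x, P x <-> den test [x] = 0) -> ce P.
Proof.
  intro HP. exists (PMu (PComp (comp 1 test) [PProj 1])). intro x. rewrite HP. split.
  - intro H0. exists 0. constructor.
    + eapply ev_comp. constructor. apply evp. reflexivity. constructor.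
      simpl. pose proof (comp_correct test 1 [x] eq_refl) as E. rewrite H0 in E. exact E.
    + intros; lia.
  - intros [y Hy]. inversion Hy; subst. match goal with H : eval (PComp _ _) _ 0 |- _ => inversion H; subst end.
    match goal with H : evals _ _ _ |- _ => inversion H; subst end.
    match goal with H : evals [] _ _ |- _ => inversion H; subst end.
    match goal with H : eval (PProj 1) _ _ |- _ => inversion H; subst end.
    match goal with H : eval (comp 1 test) _ 0 |- _ => simpl in H; symmetry; eapply comp_sound; [|exact H] end. reflexivity.
Qed.

Lemma bprod_zero n g : bprod n g = 0 <-> exists v, v <= n /\ g v = 0.
Proof.
  induction n; simpl.
  - split. intro; exists 0; auto. intros [v [Hv Hg]]. replace v with 0 in Hg by lia. auto.
  - rewrite Nat.mul_eq_0, IHn. split.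
    + intros [[v [Hv Hg]]|H]. exists v; split; auto. exists (S n); auto.
    + intros [v [Hv Hg]]. destruct (Nat.eq_dec v (S n)). subst; auto. left; exists v; split; auto; lia.
Qed.

Lemma den_EBP b body env : den (EBP b body) env = 0 <-> exists v, v <= den b env /\ den body (v :: env) = 0.
Proof. simpl. apply bprod_zero. Qed.
Definition sel (o a b : nat) : nat := a * (1 - o) + b * o.
Lemma sel0 a b : sel 0 a b = a. Proof. unfold sel; lia. Qed.
Lemma sel1 a b : sel 1 a b = b. Proof. unfold sel; lia. Qed.

Definition mks (k i j : nat) : sent :=
  match k with 0 => SLt i j | 1 => SNLt i j | 2 => SEq i j | _ => SNEq i j end.

Definition memA (z y w o : nat) : list sent := [SLt (sel o w z) y; SLt y (sel o z w)].
Definition s5 (t c z y z' y' : nat) : sent :=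
  if t <=? 1 then mks t (sel c y z) (sel c y' z') else SEq z z.
Definition cond (t c z z' b b' : nat) : Prop :=
  match t with
  | 0 => (c = 0 -> z = z')
  | 1 => (c = 0 -> z = z') /\ (c = 1 -> z <> z')
  | 2 => b = b'
  | _ => b <> b'
  end.
Definition shape (t z y w o z' y' w' o' c : nat) : list sent * sent :=
  (memA z y w o ++ memA z' y' w' o' ++ [s5 t c z y z' y'], mks t (cpair z y) (cpair z' y')).
Definition side (t z y w o z' y' w' o' c : nat) : Prop :=
  o <= 1 /\ o' <= 1 /\ c <= 1 /\ w < z /\ w' < z' /\ cond t c z z' (cpair z y) (cpair z' y').
Definition G0 (p : list sent * sent) : Prop :=
  exists t z y w o z' y' w' o' c, t <= 3 /\ side t z y w o z' y' w' o' c /\ p = shape t z y w o z' y' w' o' c.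

Definition eCp (a b : ex) : ex := EAdd (ETri (EAdd a b)) b.
Definition esent (k : nat) (a b : ex) : ex := EAdd (EMul (EC 4) (eCp a b)) (EC k).
Fixpoint elist (l : list ex) : ex :=
  match l with [] => EC 0 | s :: l' => EAdd (eCp s (elist l')) (EC 1) end.
Definition esel (o a b : ex) : ex := EAdd (EMul a (ESub (EC 1) o)) (EMul b o).
Definition eabs (a b : ex) : ex := EAdd (ESub a b) (ESub b a).

Lemma den_eCp a b env : den (eCp a b) env = cpair (den a env) (den b env).
Proof. rewrite cpair_tri. reflexivity. Qed.
Lemma den_esent k a b env : k <= 3 -> den (esent k a b) env = enc_sent (mks k (den a env) (den b env)).
Proof.
  intro Hk. unfold esent. cbn [den]. rewrite den_eCp.
  destruct k as [|[|[|[|]]]]; simpl; lia.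
Qed.
Lemma den_elist es sl env : Forall2 (fun e s => den e env = enc_sent s) es sl -> den (elist es) env = enc_list sl.
Proof.
  induction 1; cbn [den elist enc_list]. reflexivity. rewrite den_eCp, H, IHForall2. lia.
Qed.
Lemma den_esel o a b env : den (esel o a b) env = sel (den o env) (den a env) (den b env).
Proof. reflexivity. Qed.
Lemma den_eabs a b env : den (eabs a b) env = (den a env - den b env) + (den b env - den a env).
Proof. reflexivity. Qed.

Definition vc := EV 0. Definition vo' := EV 1. Definition vw' := EV 2. Definition vy' := EV 3.
Definition vz' := EV 4. Definition vo := EV 5. Definition vw := EV 6. Definition vy := EV 7.
Definition vz := EV 8. Definition vx := EV 9.

Definition ememA (z y w o : ex) : list ex := [esent 0 (esel o w z) y; esent 0 y (esel o z w)].
Definition es5 (t : nat) : ex :=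
  if t <=? 1 then esent t (esel vc vy vz) (esel vc vy' vz') else esent 2 vz vz.
Definition ecode (t : nat) : ex :=
  eCp (elist (ememA vz vy vw vo ++ ememA vz' vy' vw' vo' ++ [es5 t])) (esent t (eCp vz vy) (eCp vz' vy')).
Definition econd (t : nat) : ex :=
  match t with
  | 0 => EMul (ESub (EC 1) vc) (eabs vz vz')
  | 1 => EAdd (EMul (ESub (EC 1) vc) (eabs vz vz')) (EMul vc (ESub (EC 1) (eabs vz vz')))
  | 2 => eabs (eCp vz vy) (eCp vz' vy')
  | _ => ESub (EC 1) (eabs (eCp vz vy) (eCp vz' vy'))
  end.
Definition ebody (t : nat) : ex :=
  EAdd (eabs vx (ecode t)) (EAdd (ESub (EAdd vw (EC 1)) vz) (EAdd (ESub (EAdd vw' (EC 1)) vz') (econd t))).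
Definition etest1 (t : nat) : ex :=
  EBP (EV 0) (EBP (EV 1) (EBP (EV 2) (EBP (EC 1) (EBP (EV 4) (EBP (EV 5) (EBP (EV 6)
    (EBP (EC 1) (EBP (EC 1) (ebody t))))))))).
Definition etest : ex := EMul (EMul (etest1 0) (etest1 1)) (EMul (etest1 2) (etest1 3)).

Lemma den_ecode t z y w o z' y' w' o' c x : t <= 3 ->
  den (ecode t) [c; o'; w'; y'; z'; o; w; y; z; x] = enc_pair (shape t z y w o z' y' w' o' c).
Proof.
  intro Ht. unfold ecode, shape, enc_pair. rewrite den_eCp. simpl fst; simpl snd. f_equal.
  - apply den_elist. unfold ememA, memA.
    destruct t as [|[|[|[|]]]]; try lia; unfold es5, s5; simpl Nat.leb; cbv iota; cbn [app];
    repeat constructor; rewrite den_esent by lia; reflexivity.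
  - rewrite den_esent by lia. rewrite !den_eCp. reflexivity.
Qed.

Lemma den_econd t z y w o z' y' w' o' c x : t <= 3 -> c <= 1 ->
  (den (econd t) [c; o'; w'; y'; z'; o; w; y; z; x] = 0 <-> cond t c z z' (cpair z y) (cpair z' y')).
Proof.
  intros Ht Hc. destruct t as [|[|[|[|]]]]; try lia; unfold econd; cbn [den];
  rewrite ?den_eabs, ?den_eCp; cbn [den nth vc vo' vw' vy' vz' vo vw vy vz vx]; unfold cond;
  destruct c as [|[|]]; try lia; split; intros; try lia; intuition lia.
Qed.

Lemma den_ebody t z y w o z' y' w' o' c x : t <= 3 -> c <= 1 ->
  (den (ebody t) [c; o'; w'; y'; z'; o; w; y; z; x] = 0 <->
   x = enc_pair (shape t z y w o z' y' w' o' c) /\ w < z /\ w' < z' /\ cond t c z z' (cpair z y) (cpair z' y')).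
Proof.
  intros Ht Hc. unfold ebody. cbn [den]. rewrite den_eabs. rewrite den_ecode by auto.
  rewrite <- den_econd with (o := o) (w := w) (y' := y') (o' := o') (w' := w') (x := x) by auto.
  cbn [den nth vc vo' vw' vy' vz' vo vw vy vz vx]. lia.
Qed.
Lemma sent_args_le k i j : k <= 3 -> i <= enc_sent (mks k i j) /\ j <= enc_sent (mks k i j).
Proof.
  intro Hk. pose proof (cpair_ge_l i j). pose proof (cpair_ge_r i j).
  destruct k as [|[|[|[|]]]]; simpl; lia.
Qed.

Lemma in_enc_list s l : In s l -> enc_sent s <= enc_list l.
Proof.
  induction l as [|a l IH]; simpl. tauto.
  intros [->|H]. pose proof (cpair_ge_l (enc_sent s) (enc_list l)); lia.
  pose proof (IH H). pose proof (cpair_ge_r (enc_sent a) (enc_list l)); lia.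
Qed.

Lemma shape_bounds t z y w o z' y' w' o' c : t <= 3 -> o <= 1 -> o' <= 1 ->
  let x := enc_pair (shape t z y w o z' y' w' o' c) in
  z <= x /\ y <= x /\ w <= x /\ z' <= x /\ y' <= x /\ w' <= x.
Proof.
  intros Ht Ho Ho' x. unfold x, shape, enc_pair; cbn [fst snd].
  set (al := memA z y w o ++ memA z' y' w' o' ++ [s5 t c z y z' y']).
  pose proof (cpair_ge_l (enc_list al) (enc_sent (mks t (cpair z y) (cpair z' y')))).
  pose proof (cpair_ge_r (enc_list al) (enc_sent (mks t (cpair z y) (cpair z' y')))).
  destruct (sent_args_le t (cpair z y) (cpair z' y') Ht).
  pose proof (cpair_ge_l z y). pose proof (cpair_ge_r z y).
  pose proof (cpair_ge_l z' y'). pose proof (cpair_ge_r z' y').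
  assert (Hw : w <= enc_list al).
  { destruct o as [|[|]]; try lia.
    - pose proof (in_enc_list (SLt (sel 0 w z) y) al ltac:(unfold al, memA; simpl; tauto)) as Hin.
      rewrite sel0 in Hin. pose proof (sent_args_le 0 w y ltac:(lia)) as Ha. cbn [mks] in Ha. lia.
    - pose proof (in_enc_list (SLt y (sel 1 z w)) al ltac:(unfold al, memA; simpl; tauto)) as Hin.
      rewrite sel1 in Hin. pose proof (sent_args_le 0 y w ltac:(lia)) as Ha. cbn [mks] in Ha. lia. }
  assert (Hw' : w' <= enc_list al).
  { destruct o' as [|[|]]; try lia.
    - pose proof (in_enc_list (SLt (sel 0 w' z') y') al ltac:(unfold al, memA; simpl; tauto)) as Hin.
      rewrite sel0 in Hin. pose proof (sent_args_le 0 w' y' ltac:(lia)) as Ha. cbn [mks] in Ha. lia.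
    - pose proof (in_enc_list (SLt y' (sel 1 z' w')) al ltac:(unfold al, memA; simpl; tauto)) as Hin.
      rewrite sel1 in Hin. pose proof (sent_args_le 0 y' w' ltac:(lia)) as Ha. cbn [mks] in Ha. lia. }
  lia.
Qed.

Lemma etest1_spec t x : t <= 3 ->
  (den (etest1 t) [x] = 0 <-> exists z y w o z' y' w' o' c,
     side t z y w o z' y' w' o' c /\ x = enc_pair (shape t z y w o z' y' w' o' c)).
Proof.
  intro Ht. unfold etest1. split.
  - intro H.
    apply den_EBP in H; destruct H as [z [Hz H]].
    apply den_EBP in H; destruct H as [y [Hy H]].
    apply den_EBP in H; destruct H as [w [Hw H]].
    apply den_EBP in H; destruct H as [o [Ho H]].
    apply den_EBP in H; destruct H as [z' [Hz' H]].
    apply den_EBP in H; destruct H as [y' [Hy' H]].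
    apply den_EBP in H; destruct H as [w' [Hw' H]].
    apply den_EBP in H; destruct H as [o' [Ho' H]].
    apply den_EBP in H; destruct H as [c [Hc H]].
    cbn [den] in Ho, Ho', Hc.
    apply den_ebody in H; auto. destruct H as [Hx [H1 [H2 H3]]].
    exists z, y, w, o, z', y', w', o', c. unfold side. repeat split; auto.
  - intros [z [y [w [o [z' [y' [w' [o' [c [Hs Hx]]]]]]]]]].
    destruct Hs as [Ho [Ho' [Hc [Hwz [Hwz' Hcond]]]]].
    destruct (shape_bounds t z y w o z' y' w' o' c Ht Ho Ho') as [B1 [B2 [B3 [B4 [B5 B6]]]]].
    rewrite <- Hx in *.
    apply den_EBP; exists z; split; [exact B1|].
    apply den_EBP; exists y; split; [exact B2|].
    apply den_EBP; exists w; split; [exact B3|].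
    apply den_EBP; exists o; split; [exact Ho|].
    apply den_EBP; exists z'; split; [exact B4|].
    apply den_EBP; exists y'; split; [exact B5|].
    apply den_EBP; exists w'; split; [exact B6|].
    apply den_EBP; exists o'; split; [exact Ho'|].
    apply den_EBP; exists c; split; [exact Hc|].
    apply den_ebody; auto.
Qed.

Lemma etest_spec x : (exists p, enc_pair p = x /\ G0 p) <-> den etest [x] = 0.
Proof.
  unfold etest. cbn [den]. rewrite !Nat.mul_eq_0.
  rewrite !etest1_spec by lia. split.
  - intros [p [Hp [t [z [y [w [o [z' [y' [w' [o' [c [Ht [Hs E]]]]]]]]]]]]]].
    subst p. assert (X : exists z y w o z' y' w' o' c,
     side t z y w o z' y' w' o' c /\ x = enc_pair (shape t z y w o z' y' w' o' c)).
    { exists z, y, w, o, z', y', w', o', c. auto. }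
    destruct t as [|[|[|[|]]]]; try lia; tauto.
  - assert (K : forall t, t <= 3 -> (exists z y w o z' y' w' o' c,
     side t z y w o z' y' w' o' c /\ x = enc_pair (shape t z y w o z' y' w' o' c)) ->
     exists p, enc_pair p = x /\ G0 p).
    { intros t Ht [z [y [w [o [z' [y' [w' [o' [c [Hs Hx]]]]]]]]]].
      exists (shape t z y w o z' y' w' o' c). split; auto.
      exists t, z, y, w, o, z', y', w', o', c. auto. }
    intros [[H|H]|[H|H]]; [apply (K 0)|apply (K 1)|apply (K 2)|apply (K 3)]; auto; lia.
Qed.

Lemma G0_enum : enum_operator G0.
Proof.
  split.
  - intros p q E Hp. apply enc_pair_inj in E. subst; auto.
  - apply (ce_test etest). intro x. apply etest_spec.
Qed.
Definition memb (A : str) (z y : nat) : Prop :=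
  exists w, w < z /\ pdom A w /\ pdom A y /\ pdom A z /\
    ((prel A w y /\ prel A y z) \/ (prel A z y /\ prel A y w)).

Definition Bof (A : str) : str :=
  Pres (fun b => exists z y, b = cpair z y /\ memb A z y)
       (fun b b' => exists z y z' y', b = cpair z y /\ b' = cpair z' y' /\
                     (prel A z z' \/ (z = z' /\ prel A y y'))).

Lemma memA_ok (A : str) z y w o : o <= 1 -> w < z ->
  (forall s, In s (memA z y w o) -> diag A s) -> memb A z y.
Proof.
  intros Ho Hw H. unfold memA in H.
  assert (H1 := H _ (or_introl eq_refl)). assert (H2 := H _ (or_intror (or_introl eq_refl))).
  destruct o as [|[|]]; try lia; rewrite ?sel0, ?sel1 in H1, H2; simpl in H1, H2;
  exists w; intuition.
Qed.

Lemma memA_ex (A : str) z y : memb A z y ->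
  exists w o, o <= 1 /\ w < z /\ forall s, In s (memA z y w o) -> diag A s.
Proof.
  intros [w [Hw [Dw [Dy [Dz [[R1 R2]|[R1 R2]]]]]]].
  - exists w, 0. repeat split; auto. unfold memA; rewrite sel0, sel0.
    intros s [<-|[<-|[]]]; simpl; auto.
  - exists w, 1. repeat split; auto. unfold memA; rewrite sel1, sel1.
    intros s [<-|[<-|[]]]; simpl; auto.
Qed.

Lemma in_shape s t z y w o z' y' w' o' c :
  In s (fst (shape t z y w o z' y' w' o' c)) <->
  In s (memA z y w o) \/ In s (memA z' y' w' o') \/ s = s5 t c z y z' y'.
Proof.
  unfold shape; cbn [fst]. rewrite !in_app_iff. simpl. intuition.
Qed.

Lemma op_diag (A : str) : (forall x, pdom A x -> ~ prel A x x) ->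
  forall phi, apply_op G0 (diag A) phi <-> diag (Bof A) phi.
Proof.
  intros Irr phi. split.
  - intros [alpha [[t [z [y [w [o [z' [y' [w' [o' [c [Ht [Hs E]]]]]]]]]]]] Hal]].
    destruct Hs as [Ho [Ho' [Hc [Hwz [Hwz' Hcond]]]]].
    assert (Hal' : forall s, In s (fst (shape t z y w o z' y' w' o' c)) -> diag A s)
      by (rewrite <- E; exact Hal).
    assert (M1 : memb A z y).
    { apply (memA_ok A z y w o); auto. intros s Hs; apply Hal'; apply in_shape; auto. }
    assert (M2 : memb A z' y').
    { apply (memA_ok A z' y' w' o'); auto. intros s Hs; apply Hal'; apply in_shape; auto. }
    assert (H5 : diag A (s5 t c z y z' y')) by (apply Hal'; apply in_shape; auto).
    assert (Ephi : phi = mks t (cpair z y) (cpair z' y')) by (unfold shape in E; congruence).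
    subst phi.
    assert (D1 : pdom (Bof A) (cpair z y)) by (exists z, y; auto).
    assert (D2 : pdom (Bof A) (cpair z' y')) by (exists z', y'; auto).
    destruct t as [|[|[|[|]]]]; try lia; unfold s5 in H5; simpl Nat.leb in H5; cbv iota in H5;
      simpl in Hcond |- *.
    + repeat split; auto. exists z, y, z', y'. repeat split; auto.
      destruct c as [|[|]]; try lia; rewrite ?sel0, ?sel1 in H5; simpl in H5.
      * right; split; [auto|tauto].
      * left; tauto.
    + repeat split; auto. intros [z1 [y1 [z1' [y1' [E1 [E2 R]]]]]].
      apply cpair_inj in E1; apply cpair_inj in E2. destruct E1, E2; subst z1 y1 z1' y1'.
      destruct c as [|[|]]; try lia; rewrite ?sel0, ?sel1 in H5; simpl in H5.
      * destruct Hcond as [Hc1 _]. specialize (Hc1 eq_refl). subst z'.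
        destruct R as [R|[_ R]]. destruct M1 as [? [? [? [? [? ?]]]]]; apply (Irr z); auto. tauto.
      * destruct Hcond as [_ Hc1]. specialize (Hc1 eq_refl).
        destruct R as [R|[R _]]; tauto.
    + repeat split; auto.
    + repeat split; auto.
  - intro H.
    assert (K : forall t z y z' y' c, t <= 3 -> c <= 1 -> memb A z y -> memb A z' y' ->
              cond t c z z' (cpair z y) (cpair z' y') -> diag A (s5 t c z y z' y') ->
              phi = mks t (cpair z y) (cpair z' y') -> apply_op G0 (diag A) phi).
    { intros t z y z' y' c Ht Hc M1 M2 Hcond H5 ->.
      destruct (memA_ex A z y M1) as [w [o [Ho [Hw Hm]]]].
      destruct (memA_ex A z' y' M2) as [w' [o' [Ho' [Hw' Hm']]]].
      exists (fst (shape t z y w o z' y' w' o' c)). split.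
      - exists t, z, y, w, o, z', y', w', o', c. repeat split; auto.
      - intros s Hs. apply in_shape in Hs. destruct Hs as [Hs|[Hs|Hs]]; [auto|auto|subst s; auto]. }
    destruct phi as [i j|i j|i j|i j]; simpl in H.
    + destruct H as [[z [y [-> M1]]] [[z' [y' [-> M2]]] [z1 [y1 [z1' [y1' [E1 [E2 R]]]]]]]].
      apply cpair_inj in E1; apply cpair_inj in E2. destruct E1, E2; subst z1 y1 z1' y1'.
      destruct R as [R|[Ez R]].
      * apply (K 0 z y z' y' 1); auto; simpl; try lia.
        rewrite !sel1. simpl. destruct M1 as [? [? [? [? [? ?]]]]]; destruct M2 as [? [? [? [? [? ?]]]]]; auto.
      * apply (K 0 z y z' y' 0); auto; simpl; try lia.
        rewrite !sel0. simpl. destruct M1 as [? [? [? [? [? ?]]]]]; destruct M2 as [? [? [? [? [? ?]]]]]; auto.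
    + destruct H as [[z [y [-> M1]]] [[z' [y' [-> M2]]] NR]].
      pose proof M1 as [? [? [? [Dy [Dz ?]]]]]. pose proof M2 as [? [? [? [Dy' [Dz' ?]]]]].
      destruct (Nat.eq_dec z z') as [Ez|Ez].
      * apply (K 1 z y z' y' 0); auto; simpl; try lia.
        rewrite !sel0. simpl. repeat split; auto. intro R. apply NR.
        exists z, y, z', y'. auto.
      * apply (K 1 z y z' y' 1); auto; simpl; try lia.
        rewrite !sel1. simpl. repeat split; auto. intro R. apply NR.
        exists z, y, z', y'. auto.
    + destruct H as [[z [y [-> M1]]] [[z' [y' [-> M2]]] Eq]].
      pose proof M1 as [? [? [? [Dy [Dz ?]]]]].
      apply (K 2 z y z' y' 0); auto; simpl; try lia; auto.
    + destruct H as [[z [y [-> M1]]] [[z' [y' [-> M2]]] Eq]].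
      pose proof M1 as [? [? [? [Dy [Dz ?]]]]].
      apply (K 3 z y z' y' 0); auto; simpl; try lia; auto.
Qed.
Definition slo {T} (L : pres T) : Prop :=
  (forall x, pdom L x -> ~ prel L x x) /\
  (forall x y z, pdom L x -> pdom L y -> pdom L z -> prel L x y -> prel L y z -> prel L x z) /\
  (forall x y, pdom L x -> pdom L y -> prel L x y \/ x = y \/ prel L y x).
Definition emb {T U} (L : pres T) (M : pres U) (f : T -> U) : Prop :=
  (forall x, pdom L x -> pdom M (f x)) /\
  (forall x y, pdom L x -> pdom L y -> prel L x y -> prel M (f x) (f y)).
Definition ltp {T} (L : pres T) (x y : T) : Prop := pdom L x /\ pdom L y /\ prel L x y.
Definition wfo {T} (L : pres T) : Prop := well_founded (ltp L).

Lemma wfo_emb {T U} (L : pres T) (M : pres U) f : emb L M f -> wfo M -> wfo L.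
Proof.
  intros [E1 E2] W. unfold wfo.
  apply (wf_incl _ _ (fun x y => ltp M (f x) (f y))).
  - intros x y [Dx [Dy R]]. repeat split; auto.
  - apply wf_inverse_image. exact W.
Qed.

Lemma self_emb {T} (M : pres T) e : wfo M -> emb M M e -> forall x, pdom M x -> ~ prel M (e x) x.
Proof.
  intros W [E1 E2] x. induction x as [x IH] using (well_founded_ind W).
  intros Dx R. apply (IH (e x)). repeat split; auto. apply E1; auto. apply E2; auto.
Qed.

Lemma wf_min {U} (R : U -> U -> Prop) (P : U -> Prop) : well_founded R ->
  (exists m, P m) -> exists m, P m /\ forall m', P m' -> ~ R m' m.
Proof.
  intros W [m Pm]. apply NNPP. intro N.
  assert (forall x, ~ P x). { intro x. induction x as [x IH] using (well_founded_ind W).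
    intro Px. apply N. exists x. split; auto. intros m' Pm' Rm. apply (IH m' Rm Pm'). }
  eapply H; eauto.
Qed.

Lemma wo_sb {T U} (L : pres T) (M : pres U) (e1 : T -> U) (e2 : U -> T) (u0 : U) :
  slo L -> slo M -> wfo M -> emb L M e1 -> emb M L e2 -> iso L M.
Proof.
  intros [IrL [TrL ToL]] [IrM [TrM ToM]] WM He1 He2.
  pose proof (wfo_emb L M e1 He1 WM) as WL.
  set (Pset := fun (x : T) (rec : forall y, ltp L y x -> U) (m : U) =>
        pdom M m /\ forall y (H : ltp L y x), prel M (rec y H) m).
  set (F := fun (x : T) (rec : forall y, ltp L y x -> U) =>
        epsilon (inhabits u0) (fun m => Pset x rec m /\ forall m', Pset x rec m' -> ~ prel M m' m)).
  set (h := Fix WL (fun _ => U) F).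
  assert (Fext : forall x (f g : forall y, ltp L y x -> U), (forall y p, f y p = g y p) -> F x f = F x g).
  { intros x f g Hfg. unfold F. f_equal. apply functional_extensionality. intro m.
    apply propositional_extensionality. unfold Pset.
    split; intros [[D1 D2] D3]; split; [split; auto| | split; auto|].
    - intros y H; rewrite <- Hfg; auto.
    - intros m' [D4 D5]; apply D3; split; auto; intros y H; rewrite Hfg; auto.
    - intros y H; rewrite Hfg; auto.
    - intros m' [D4 D5]; apply D3; split; auto; intros y H; rewrite <- Hfg; auto. }
  assert (Heq : forall x, h x = F x (fun y _ => h y)).
  { intro x. unfold h. apply (Fix_eq WL (fun _ => U) F Fext). }
  set (Q := fun x m => pdom M m /\ forall y, ltp L y x -> prel M (h y) m).
  assert (Hspec : forall x, (exists m, Q x m) -> Q x (h x) /\ forall m', Q x m' -> ~ prel M m' (h x)).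
  { intros x Ex. rewrite Heq. unfold F.
    apply (epsilon_spec (inhabits u0) (fun m => Pset x (fun y _ => h y) m /\
               forall m', Pset x (fun y _ => h y) m' -> ~ prel M m' m)).
    destruct (wf_min (ltp M) (Q x) WM Ex) as [m [Qm Mm]].
    exists m. split. exact Qm. intros m' Qm' R. apply (Mm m' Qm'). destruct Qm, Qm'. repeat split; auto. }
  assert (HC : forall x, pdom L x -> pdom M (h x) /\ (forall y, ltp L y x -> prel M (h y) (h x)) /\
                (h x = e1 x \/ prel M (h x) (e1 x)) /\ (forall m', Q x m' -> ~ prel M m' (h x))).
  { intro x. induction x as [x IH] using (well_founded_ind WL). intro Dx.
    assert (Qe : Q x (e1 x)).
    { split. apply He1; auto. intros y Hy. destruct (IH y Hy) as [D1 [_ [D3 _]]]. apply Hy.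
      destruct Hy as [Dy [_ Ry]]. assert (prel M (e1 y) (e1 x)) by (apply He1; auto).
      destruct D3 as [D3|D3]. rewrite D3; auto. apply TrM with (e1 y); auto; apply He1; auto. }
    destruct (Hspec x (ex_intro _ _ Qe)) as [[Dh Rh] Mh].
    split; auto. split; auto. split; auto.
    destruct (ToM (h x) (e1 x) Dh (proj1 Qe)) as [R|[R|R]]; auto.
    exfalso. apply (Mh _ Qe R). }
  exists h. split; [|split; [|split]].
  - intros x Dx; apply HC; auto.
  - intros x y Dx Dy E. destruct (ToL x y Dx Dy) as [R|[R|R]]; auto; exfalso.
    + destruct (HC y Dy) as [_ [H _]]. specialize (H x (conj Dx (conj Dy R))). rewrite E in H.
      apply (IrM (h y)); auto. apply HC; auto.
    + destruct (HC x Dx) as [_ [H _]]. specialize (H y (conj Dy (conj Dx R))). rewrite E in H.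
      apply (IrM (h y)); auto. apply HC; auto.
  - intros m Dm. apply NNPP. intro N.
    assert (All : forall x, pdom L x -> prel M (h x) m).
    { intro x. induction x as [x IH] using (well_founded_ind WL). intro Dx.
      assert (Qm : Q x m) by (split; auto; intros y Hy; apply IH; auto; apply Hy).
      destruct (HC x Dx) as [Dh [_ [_ Mh]]].
      destruct (ToM (h x) m Dh Dm) as [R|[R|R]]; auto.
      - exfalso; apply N; exists x; auto.
      - exfalso; apply (Mh m Qm R). }
    assert (Em : emb M M (fun u => h (e2 u))).
    { split. intros u Du. apply HC. apply He2; auto.
      intros u v Du Dv R. destruct He2 as [E1 E2]. apply HC. apply E1; auto.
      repeat split; auto. }
    apply (self_emb M _ WM Em m Dm). apply All. apply He2; auto.
  - intros x y Dx Dy. split.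
    + intro R. apply HC; auto. repeat split; auto.
    + intro R. destruct (ToL x y Dx Dy) as [R'|[R'|R']]; auto; exfalso.
      * subst. apply (IrM (h y)); auto. apply HC; auto.
      * assert (prel M (h y) (h x)) by (apply HC; auto; repeat split; auto).
        apply (IrM (h x)). apply HC; auto. apply TrM with (h y); auto; apply HC; auto.
Qed.
Lemma lex_irrefl l : ~ lexlt l l.
Proof. induction l; simpl; [tauto|]. intros [H|[_ H]]; [lia|auto]. Qed.

Lemma lex_trans a b c : lexlt a b -> lexlt b c -> lexlt a c.
Proof.
  revert b c; induction a as [|x a IH]; intros [|y b] [|z c]; simpl; try tauto.
  intros [H1|[H1 H2]] [H3|[H3 H4]]; subst; try (left; lia). right; split; eauto.
Qed.

Lemma lex_total a b : length a = length b -> lexlt a b \/ a = b \/ lexlt b a.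
Proof.
  revert b; induction a as [|x a IH]; intros [|y b]; simpl; try discriminate; auto.
  intro E. injection E as E. destruct (lt_eq_lt_dec x y) as [[H|H]|H]; auto.
  subst. destruct (IH b E) as [H|[H|H]]; subst; auto.
Qed.

Lemma lex_app a a' b b' : length a = length a' ->
  (lexlt (a ++ b) (a' ++ b') <-> lexlt a a' \/ (a = a' /\ lexlt b b')).
Proof.
  revert a'; induction a as [|x a IH]; intros [|y a']; simpl; try discriminate.
  - intros _. split; [auto|]. intros [[]|[_ H]]; auto.
  - intro E. injection E as E. rewrite (IH a' E). split.
    + intros [H|[-> [H|[-> H]]]]; auto.
    + intros [[H|[-> H]]|[H1 H2]]; auto. injection H1 as -> ->. auto.
Qed.

Lemma lex_hd a b : lexlt a b -> hd 0 a <= hd 0 b.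
Proof. destruct a, b; simpl; intuition lia. Qed.

Lemma lex_zero m v : ~ lexlt v (repeat 0 m).
Proof.
  revert v; induction m; intros [|x v]; simpl; try tauto. intros [H|[_ H]]. lia. eapply IHm; eauto.
Qed.

Lemma slo_omega m : slo (omega_pow m).
Proof.
  split; [|split]; simpl.
  - intros; apply lex_irrefl.
  - intros; eapply lex_trans; eauto.
  - intros x y Hx Hy. apply lex_total; congruence.
Qed.

Lemma wfo_omega m : wfo (omega_pow m).
Proof.
  unfold wfo, ltp; simpl.
  assert (K : forall k l, length l = k -> Acc (fun x y => length x = m /\ length y = m /\ lexlt x y) l).
  2:{ intro l. apply (K (length l)); auto. }
  intro k. destruct (Nat.eq_dec k m) as [Ek|Ek].
  2:{ intros l Hl. constructor. intros y [_ [Hy _]]. lia. }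
  subst k. induction m as [|m IHm].
  - intros l _. constructor. intros y [Hy [Hl H]]. destruct y, l; simpl in *; try discriminate; tauto.
  -
    assert (IHm' : forall l, length l = m -> Acc (fun x y => length x = m /\ length y = m /\ lexlt x y) l).
    { intros l Hl. apply IHm; auto. }
    clear IHm.
    assert (Main : forall a t, length t = m ->
               Acc (fun x y => length x = S m /\ length y = S m /\ lexlt x y) (a :: t)).
    { intro a. induction a as [a IHa] using (well_founded_ind lt_wf).
      intros t Ht. specialize (IHm' t Ht). induction IHm' as [t _ IHt].
      constructor. intros [|b s] [Hy [_ Hlt]]; simpl in Hy; try discriminate.
      injection Hy as Hy. simpl in Hlt. destruct Hlt as [H|[-> H]].
      - apply IHa; auto.
      - apply IHt; auto. }
    intros [|a t] Hl; simpl in Hl; try discriminate. injection Hl as Hl. apply Main; auto.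
Qed.

Definition rev_str (A : str) : str := Pres (pdom A) (fun x y => prel A y x).

Lemma iso_trans {T U V} (A : pres T) (B : pres U) (C : pres V) : iso A B -> iso B C -> iso A C.
Proof.
  intros [f [F1 [F2 [F3 F4]]]] [g [G1 [G2 [G3 G4]]]]. exists (fun x => g (f x)).
  split; [|split; [|split]].
  - auto.
  - intros x y Dx Dy E. apply F2; auto.
  - intros z Dz. destruct (G3 z Dz) as [y [Dy <-]]. destruct (F3 y Dy) as [x [Dx <-]]. eauto.
  - intros x y Dx Dy. rewrite F4, G4; auto. tauto.
Qed.

Lemma iso_sym {T U} (A : pres T) (B : pres U) (t0 : T) : iso A B -> iso B A.
Proof.
  intros [f [F1 [F2 [F3 F4]]]].
  set (g := fun y => epsilon (inhabits t0) (fun x => pdom A x /\ f x = y)).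
  assert (Hg : forall y, pdom B y -> pdom A (g y) /\ f (g y) = y).
  { intros y Dy. apply (epsilon_spec (inhabits t0) (fun x => pdom A x /\ f x = y)). auto. }
  exists g. split; [|split; [|split]].
  - intros; apply Hg; auto.
  - intros x y Dx Dy E. rewrite <- (proj2 (Hg x Dx)), <- (proj2 (Hg y Dy)), E. auto.
  - intros x Dx. exists (f x). split; auto. apply F2; auto. apply Hg; auto. apply Hg; auto.
  - intros x y Dx Dy. destruct (Hg x Dx) as [D1 E1], (Hg y Dy) as [D2 E2].
    rewrite F4 by auto. rewrite E1, E2. tauto.
Qed.

Lemma iso_rev {T U} (A : pres T) (B : pres U) : iso A B -> iso (rev_order A) (rev_order B).
Proof.
  intros [f [F1 [F2 [F3 F4]]]]. exists f. simpl. split; [|split; [|split]]; auto.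
Qed.

Lemma iso_same (A B : str) : (forall x, pdom A x <-> pdom B x) ->
  (forall x y, pdom A x -> pdom A y -> (prel A x y <-> prel B x y)) -> iso A B.
Proof.
  intros H1 H2. exists (fun x => x). split; [|split; [|split]]; auto.
  - intros; apply H1; auto.
  - intros y Dy. exists y; split; auto. apply H1; auto.
Qed.

Lemma slo_iso {T U} (A : pres T) (B : pres U) : iso A B -> slo B -> slo A.
Proof.
  intros [f [F1 [F2 [F3 F4]]]] [I [Tr To]]. split; [|split].
  - intros x Dx R. apply (I (f x)); auto. apply F4; auto.
  - intros x y z Dx Dy Dz R1 R2. apply F4; auto. apply F4 in R1; auto. apply F4 in R2; auto.
    apply Tr with (f y); auto.
  - intros x y Dx Dy. destruct (To (f x) (f y) (F1 x Dx) (F1 y Dy)) as [R|[R|R]];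
    [left; apply F4; auto | right; left; apply F2; auto | right; right; apply F4; auto].
Qed.

Lemma slo_rev {T} (A : pres T) : slo A -> slo (rev_order A).
Proof.
  intros [I [Tr To]]. split; [|split]; simpl; auto.
  - intros x y z Dx Dy Dz R1 R2. apply Tr with y; auto.
  - intros x y Dx Dy. destruct (To x y Dx Dy) as [R|[R|R]]; auto.
Qed.

Lemma omega_not_rev m : 1 <= m -> ~ iso (omega_pow m) (rev_order (omega_pow m)).
Proof.
  intros Hm [h [H1 [H2 [H3 H4]]]]. simpl in *.
  assert (Lz : length (repeat 0 m) = m) by apply repeat_length.
  set (l0 := h (repeat 0 m)).
  assert (L0 : length l0 = m) by (apply H1; auto).
  set (l1 := S (hd 0 l0) :: tl l0).
  assert (L1 : length l1 = m) by (unfold l1; destruct l0; simpl in *; lia).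
  destruct (H3 l1 L1) as [v [Dv Ev]].
  assert (lexlt (h (repeat 0 m)) (h v)).
  { rewrite Ev. fold l0. unfold l1. destruct l0; simpl in *. lia. left; lia. }
  apply H4 in H; auto. apply (lex_zero m v); auto.
Qed.
Definition decz (b : nat) : nat := epsilon (inhabits 0) (fun z => exists y, b = cpair z y).
Definition decy (b : nat) : nat := epsilon (inhabits 0) (fun y => exists z, b = cpair z y).

Lemma dec_cpair z y : decz (cpair z y) = z /\ decy (cpair z y) = y.
Proof.
  split.
  - destruct (epsilon_spec (inhabits 0) (fun z0 => exists y0, cpair z y = cpair z0 y0) (ex_intro _ z (ex_intro _ y eq_refl))) as [y0 E].
    fold (decz (cpair z y)) in E. apply cpair_inj in E. symmetry; apply E.
  - destruct (epsilon_spec (inhabits 0) (fun y0 => exists z0, cpair z y = cpair z0 y0) (ex_intro _ y (ex_intro _ z eq_refl))) as [z0 E].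
    fold (decy (cpair z y)) in E. apply cpair_inj in E. symmetry; apply E.
Qed.

Definition val (A : str) (f : nat -> list nat) (k : nat) : nat :=
  if excluded_middle_informative (pdom A k) then hd 0 (f k) else 0.
Fixpoint mx (A : str) (f : nat -> list nat) (N : nat) : nat :=
  match N with 0 => val A f 0 | S N' => Nat.max (mx A f N') (val A f N) end.

Lemma mx_ge A f k N : pdom A k -> k <= N -> hd 0 (f k) <= mx A f N.
Proof.
  intros Dk. induction N; intro H.
  - replace k with 0 in * by lia. simpl. unfold val. destruct (excluded_middle_informative _); tauto || lia.
  - destruct (Nat.eq_dec k (S N)) as [->|E].
    + simpl. unfold val. destruct (excluded_middle_informative _); [lia|tauto].
    + simpl. specialize (IHN ltac:(lia)). lia.
Qed.

Definition ginv (A : str) (f : nat -> list nat) (l : list nat) : nat :=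
  epsilon (inhabits 0) (fun a => pdom A a /\ f a = l).
Definition cb (A : str) (f : nat -> list nat) (Z : list nat) : nat := S (mx A f (ginv A f Z)).
Fixpoint sumc (A : str) (f : nat -> list nat) (P : list nat) (k : nat) : nat :=
  match k with 0 => 0 | S k' => sumc A f P k' + cb A f (P ++ [k']) end.

Lemma sumc_mono A f P k k' : k < k' -> sumc A f P k + cb A f (P ++ [k]) <= sumc A f P k'.
Proof. induction 1; simpl; lia. Qed.

Definition E1 (A : str) (f : nat -> list nat) (b : nat) : list nat :=
  let Z := f (decz b) in let Y := f (decy b) in
  removelast Z ++ (sumc A f (removelast Z) (last Z 0) + hd 0 Y) :: tl Y.

Definition E2 (A : str) (f : nat -> list nat) (n w0 : nat) (L : list nat) : nat :=
  let p := f w0 in let c := firstn n L in let d := skipn n L in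
  cpair (ginv A f ((hd 0 p + 2 + hd 0 c) :: tl c)) (ginv A f ((hd 0 p + 1) :: d)).

Lemma B_rel (A : str) z y z' y' :
  prel (Bof A) (cpair z y) (cpair z' y') <-> prel A z z' \/ (z = z' /\ prel A y y').
Proof.
  simpl. split.
  - intros [z1 [y1 [z1' [y1' [E1 [E2 R]]]]]].
    apply cpair_inj in E1; apply cpair_inj in E2. destruct E1, E2; subst; auto.
  - intro R. exists z, y, z', y'. auto.
Qed.

Lemma slo_B (A : str) : slo A -> slo (Bof A).
Proof.
  intros [I [Tr To]]. split; [|split].
  - intros b [z [y [-> [w [_ [_ [Dy [Dz _]]]]]]]]. rewrite B_rel.
    intros [R|[_ R]]; [apply (I z)|apply (I y)]; auto.
  - intros b1 b2 b3 [z1 [y1 [-> [? [_ [_ [D1 [E1 _]]]]]]]] [z2 [y2 [-> [? [_ [_ [D2 [E2 _]]]]]]]]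
      [z3 [y3 [-> [? [_ [_ [D3 [E3 _]]]]]]]]. rewrite !B_rel.
    intros [R1|[-> R1]] [R2|[-> R2]].
    + left; apply Tr with z2; auto.
    + left; auto.
    + left; auto.
    + right; split; auto. apply Tr with y2; auto.
  - intros b b' [z [y [-> [? [_ [_ [Dy [Dz _]]]]]]]] [z' [y' [-> [? [_ [_ [Dy' [Dz' _]]]]]]]].
    rewrite !B_rel. destruct (To z z' Dz Dz') as [R|[->|R]]; auto.
    destruct (To y y' Dy Dy') as [R|[->|R]]; auto.
Qed.

Lemma B_omega (A : str) (n : nat) : 1 <= n -> iso A (omega_pow n) -> iso (Bof A) (omega_pow (2 * n - 1)).
Proof.
  intros Hn HA.
  pose proof (slo_iso _ _ HA (slo_omega n)) as SA.
  pose proof SA as [IA [TA ToA]].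
  destruct HA as [f [F1 [F2 [F3 F4]]]]. simpl in F1, F3, F4.
  assert (Gi : forall l, length l = n -> pdom A (ginv A f l) /\ f (ginv A f l) = l).
  { intros l Hl. apply (epsilon_spec (inhabits 0) (fun a => pdom A a /\ f a = l)). auto. }
  assert (Gf : forall a, pdom A a -> ginv A f (f a) = a).
  { intros a Da. destruct (Gi (f a) (F1 a Da)) as [D E]. apply F2; auto. }
  assert (Blk : forall z y, memb A z y -> hd 0 (f y) < cb A f (f z)).
  { intros z y [w [Hw [Dw [Dy [Dz [[R1 R2]|[R1 R2]]]]]]]; unfold cb; rewrite Gf by auto.
    - apply F4 in R2; auto. apply lex_hd in R2. pose proof (mx_ge A f z z Dz (le_n _)). lia.
    - apply F4 in R2; auto. apply lex_hd in R2. pose proof (mx_ge A f w z Dw ltac:(lia)). lia. }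
  assert (SplitL : forall z, pdom A z -> exists P k, f z = P ++ [k] /\ length P = n - 1).
  { intros z Dz. pose proof (F1 z Dz) as L. assert (NE : f z <> []) by (intro E; rewrite E in L; simpl in L; lia).
    exists (removelast (f z)), (last (f z) 0). split. apply app_removelast_last; auto.
    rewrite (app_removelast_last 0 NE) in L. rewrite length_app in L. simpl in L. lia. }
  assert (E1eq : forall z y P k, f z = P ++ [k] ->
     E1 A f (cpair z y) = P ++ (sumc A f P k + hd 0 (f y)) :: tl (f y)).
  { intros z y P k E. unfold E1. destruct (dec_cpair z y) as [-> ->]. rewrite E.
    rewrite removelast_last, last_last. reflexivity. }
  assert (HE1 : emb (Bof A) (omega_pow (2 * n - 1)) (E1 A f)).
  { split.
    - intros b [z [y [-> M]]]. pose proof M as [w [_ [_ [Dy [Dz _]]]]]. simpl.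
      destruct (SplitL z Dz) as [P [k [EZ LP]]]. rewrite (E1eq z y P k EZ).
      rewrite length_app. simpl. pose proof (F1 y Dy) as LY. destruct (f y); simpl in *; lia.
    - intros b b' [z [y [-> M]]] [z' [y' [-> M']]].
      pose proof M as [w [_ [_ [Dy [Dz _]]]]]. pose proof M' as [w' [_ [_ [Dy' [Dz' _]]]]].
      rewrite B_rel. simpl.
      destruct (SplitL z Dz) as [P [k [EZ LP]]]. destruct (SplitL z' Dz') as [P' [k' [EZ' LP']]].
      rewrite (E1eq z y P k EZ), (E1eq z' y' P' k' EZ').
      pose proof (Blk z y M) as Bk. rewrite EZ in Bk.
      intros [R|[<- R]].
      + apply F4 in R; auto. rewrite EZ, EZ' in R. apply lex_app in R; [|congruence].
        apply lex_app; [congruence|]. destruct R as [R|[<- R]]; auto.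
        right; split; auto. simpl in R. destruct R as [R|[_ []]].
        left. pose proof (sumc_mono A f P k k' R). lia.
      + rewrite EZ in EZ'. apply app_inj_tail in EZ'. destruct EZ' as [<- <-].
        apply lex_app; auto. right; split; auto.
        apply F4 in R; auto. pose proof (F1 y Dy) as LY. pose proof (F1 y' Dy') as LY'.
        destruct (f y) as [|a t], (f y') as [|a' t']; simpl in *; try lia.
        destruct R as [R|[-> R]]; [left; lia|right; auto]. }
  assert (Ew0 : exists w0, pdom A w0 /\ forall k, pdom A k -> w0 <= k).
  { destruct (Gi (repeat 0 n) (repeat_length 0 n)) as [D0 _].
    destruct (wf_min lt (pdom A) lt_wf (ex_intro _ _ D0)) as [w0 [Dw0 Mw0]].
    exists w0. split; auto. intros k Dk. specialize (Mw0 k Dk). lia. }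
  destruct Ew0 as [w0 [Dw0 Mw0]].
  pose proof (F1 w0 Dw0) as Lp.
  assert (HE2 : emb (omega_pow (2 * n - 1)) (Bof A) (E2 A f n w0)).
  { assert (Split2 : forall L, length L = 2 * n - 1 ->
       exists a t d, L = (a :: t) ++ d /\ length t = n - 1 /\ length d = n - 1 /\
         E2 A f n w0 L = cpair (ginv A f ((hd 0 (f w0) + 2 + a) :: t)) (ginv A f ((hd 0 (f w0) + 1) :: d))).
    { intros L HL. pose proof (firstn_skipn n L) as E.
      assert (Lc : length (firstn n L) = n) by (apply firstn_length_le; lia).
      assert (Ld : length (skipn n L) = n - 1) by (rewrite length_skipn; lia).
      destruct (firstn n L) as [|a t] eqn:Ec; simpl in Lc; try lia.
      exists a, t, (skipn n L). split; auto. split; [lia|split; auto].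
      unfold E2. rewrite Ec. reflexivity. }
    assert (Mem : forall a t d, length t = n - 1 -> length d = n - 1 ->
       memb A (ginv A f ((hd 0 (f w0) + 2 + a) :: t)) (ginv A f ((hd 0 (f w0) + 1) :: d))).
    { intros a t d Lt Ld.
      destruct (Gi ((hd 0 (f w0) + 2 + a) :: t) ltac:(simpl; lia)) as [Dz Ez].
      destruct (Gi ((hd 0 (f w0) + 1) :: d) ltac:(simpl; lia)) as [Dy Ey].
      exists w0. repeat split; auto.
      - assert (w0 <> ginv A f ((hd 0 (f w0) + 2 + a) :: t)).
        { intro E. rewrite <- E in Ez. destruct (f w0); simpl in Ez; [discriminate|]. injection Ez; lia. }
        specialize (Mw0 _ Dz). lia.
      - left. split; apply F4; auto; rewrite ?Ez, ?Ey.
        + destruct (f w0); simpl in *; [lia|]. left; lia.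
        + simpl. left; lia. }
    split.
    - intros L HL. simpl in HL. destruct (Split2 L HL) as [a [t [d [-> [Lt [Ld ->]]]]]].
      eexists; eexists; split; [reflexivity|]. apply Mem; auto.
    - intros L L' HL HL' R. simpl in HL, HL', R.
      destruct (Split2 L HL) as [a [t [d [-> [Lt [Ld ->]]]]]].
      destruct (Split2 L' HL') as [a' [t' [d' [-> [Lt' [Ld' ->]]]]]].
      rewrite B_rel.
      destruct (Gi ((hd 0 (f w0) + 2 + a) :: t) ltac:(simpl; lia)) as [Dz Ez].
      destruct (Gi ((hd 0 (f w0) + 1) :: d) ltac:(simpl; lia)) as [Dy Ey].
      destruct (Gi ((hd 0 (f w0) + 2 + a') :: t') ltac:(simpl; lia)) as [Dz' Ez'].
      destruct (Gi ((hd 0 (f w0) + 1) :: d') ltac:(simpl; lia)) as [Dy' Ey'].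
      apply lex_app in R; [|simpl; lia]. destruct R as [R|[E R]].
      + left. apply F4; auto. rewrite Ez, Ez'. simpl in R |- *. destruct R as [R|[-> R]]; [left; lia|right; auto].
      + injection E as -> ->. right. split; auto. apply F4; auto. rewrite Ey, Ey'. simpl. right; auto. }
  apply (wo_sb (Bof A) (omega_pow (2 * n - 1)) (E1 A f) (E2 A f n w0) []); auto.
  apply slo_B; auto. apply slo_omega. apply wfo_omega.
Qed.
Lemma iso_same_gen {T} (A B : pres T) : (forall x, pdom A x <-> pdom B x) ->
  (forall x y, pdom A x -> pdom A y -> (prel A x y <-> prel B x y)) -> iso A B.
Proof.
  intros H1 H2. exists (fun x => x). split; [|split; [|split]]; auto.
  - intros; apply H1; auto.
  - intros y Dy. exists y; split; auto. apply H1; auto.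
Qed.

Lemma B_rev_omega (A : str) (n : nat) : 1 <= n -> iso A (rev_order (omega_pow n)) ->
  iso (Bof A) (rev_order (omega_pow (2 * n - 1))).
Proof.
  intros Hn HA.
  assert (H1 : iso (rev_order A) (omega_pow n)).
  { eapply iso_trans. apply iso_rev, HA. apply iso_same_gen; simpl; tauto. }
  pose proof (B_omega (rev_order A) n Hn H1) as H2.
  apply iso_rev in H2.
  eapply iso_trans; [|exact H2].
  apply iso_same_gen.
  - intro b; simpl. split; intros [z [y [E M]]]; exists z, y; split; auto;
      destruct M as [w [Hw [Dw [Dy [Dz R]]]]]; exists w; repeat split; auto; simpl in *; tauto.
  - intros b b' _ _. simpl. split.
    + intros [z [y [z' [y' [E1 [E2 R]]]]]]. exists z', y', z, y. repeat split; auto.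
      destruct R as [R|[-> R]]; auto.
    + intros [z [y [z' [y' [E1 [E2 R]]]]]]. exists z', y', z, y. repeat split; auto.
      destruct R as [R|[-> R]]; auto.
Qed.

Lemma excl k (X : str) : 1 <= k -> iso X (omega_pow k) -> iso X (rev_order (omega_pow k)) -> False.
Proof.
  intros Hk H1 H2. apply (omega_not_rev k Hk). eapply iso_trans; [|exact H2]. apply (iso_sym X (omega_pow k) 0); auto.
Qed.

Lemma cls_iso k (X Y : str) : 1 <= k -> cls_omega_pow k X -> cls_omega_pow k Y ->
  (iso X Y <-> (iso X (omega_pow k) <-> iso Y (omega_pow k))).
Proof.
  intros Hk HX HY. split.
  - intro I. split; intro H.
    + eapply iso_trans; [|exact H]. apply (iso_sym X Y 0); auto.
    + eapply iso_trans; eauto.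
  - intro E. destruct HX as [HX|HX].
    + assert (HY' : iso Y (omega_pow k)) by tauto.
      eapply iso_trans; eauto. apply (iso_sym Y (omega_pow k) 0); auto.
    + assert (~ iso X (omega_pow k)) by (intro; eapply excl; eauto).
      destruct HY as [HY|HY]; [tauto|].
      eapply iso_trans; eauto. apply (iso_sym Y _ 0); auto.
Qed.

Lemma diag_iso (B C : str) : (forall phi, diag B phi <-> diag C phi) -> iso B C.
Proof.
  intro H. apply iso_same_gen.
  - intro x. pose proof (H (SEq x x)) as H0. simpl in H0. tauto.
  - intros x y Dx Dy. pose proof (H (SLt x y)) as H0. pose proof (H (SEq x x)) as H1.
    pose proof (H (SEq y y)) as H2. simpl in H0, H1, H2. intuition.
Qed.

Theorem corollary6p3 (n : nat) (hn : 1 <= n) :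
  comp_embeds (cls_omega_pow n) (cls_omega_pow (2 * n - 1)).
Proof.
  assert (Hm : 1 <= 2 * n - 1) by lia.
  assert (Irr : forall A, cls_omega_pow n A -> forall x, pdom A x -> ~ prel A x x).
  { intros A [H|H]; apply (slo_iso _ _ H).
    apply slo_omega. apply slo_rev, slo_omega. }
  assert (Side : forall A, cls_omega_pow n A ->
     (iso (Bof A) (omega_pow (2 * n - 1)) /\ iso A (omega_pow n)) \/
     (iso (Bof A) (rev_order (omega_pow (2 * n - 1))) /\ iso A (rev_order (omega_pow n)))).
  { intros A [H|H]; [left|right]; split; auto. apply B_omega; auto. apply B_rev_omega; auto. }
  exists G0. split; [apply G0_enum|split].
  - intros A HA. exists (Bof A). split.
    + destruct (Side A HA) as [[H _]|[H _]]; [left|right]; auto.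
    + apply op_diag. apply Irr; auto.
  - intros A A' B B' HA HA' HB HB'.
    assert (IB : iso B (Bof A)).
    { apply diag_iso. intro phi. rewrite <- HB. apply op_diag. apply Irr; auto. }
    assert (IB' : iso B' (Bof A')).
    { apply diag_iso. intro phi. rewrite <- HB'. apply op_diag. apply Irr; auto. }
    assert (CB : forall X Y, iso X (Bof Y) -> cls_omega_pow n Y ->
               cls_omega_pow (2 * n - 1) X /\ (iso X (omega_pow (2 * n - 1)) <-> iso Y (omega_pow n))).
    { intros X Y I HY. destruct (Side Y HY) as [[H1 H2]|[H1 H2]].
      - split. left; eapply iso_trans; eauto. split; auto. intros; eapply iso_trans; eauto.
      - split. right; eapply iso_trans; eauto. split; intro H.
        + exfalso. apply (excl (2 * n - 1) X Hm H). apply (iso_trans _ _ _ I H1).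
        + exfalso. apply (excl n Y hn H H2). }
    destruct (CB B A IB HA) as [C1 E1]. destruct (CB B' A' IB' HA') as [C2 E2].
    rewrite (cls_iso n A A' hn HA HA'), (cls_iso (2 * n - 1) B B' Hm C1 C2). tauto.
Qed.
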